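(* For every positive integer $m$ the following identity of formal power series in $\mathbb{Z}[[q]]$ holds: \[ \sum_{i=0}^\infty q^{-2i}q^{m(i^2+2i)}\frac{(1-q^{i+1})^3(1+q^{i+1})}{1-q} =(q)_{\infty}\sum_{0\leq k_m\leq\dots\leq k_2\leq k_1}\frac{q^{-2k_m}\,q^{\sum_{j=1}^m(k_j^2+2k_j)}}{(q)_{k_m}^2\,(q)_{k_1-k_2}(q)_{k_2-k_3}\cdots(q)_{k_{m-1}-k_m}}, \] where the sum on the right runs over all $m$-tuples of integers $(k_1,\dots,k_m)$ with $0\le k_m\le\dots\le k_1$ (for $m=1$ the product $(q)_{k_1-k_2}\cdots(q)_{k_{m-1}-k_m}$ is empty and equals $1$).
   Context: $(q)_k=(q;q)_k=\prod_{l=1}^{k}(1-q^l)$ for $k\ge 0$ (so $(q)_0=1$), and $(q)_\infty=\prod_{l=1}^\infty(1-q^l)$. Both sides are well-defined elements of $\mathbb{Z}[[q]]$ (the exponents $-2i+m(i^2+2i)$ and $-2k_m+\sum_j(k_j^2+2k_j)$ are nonnegative and tend to infinity). *)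

(* Defs.v *)
(* Formal power series over int are modelled as
   coefficient functions nat -> int (the coefficient of q^n). *)
From mathcomp Require Import all_boot all_order all_algebra.
Set Implicit Arguments. Unset Strict Implicit. Unset Printing Implicit Defensive.
Import GRing.Theory.
Local Open Scope ring_scope.

Definition fps := nat -> int.

Definition fps1 : fps := fun n => (n == 0%N)%:R.
Definition fpsX (k : nat) : fps := fun n => (n == k)%:R.
Definition fps_add (f g : fps) : fps := fun n => f n + g n.
Definition fps_sub (f g : fps) : fps := fun n => f n - g n.
Definition fps_mul (f g : fps) : fps :=
  fun n => \sum_(i < n.+1) f i * g (n - i)%N.
Definition fps_exp (f : fps) (k : nat) : fps := iter k (fps_mul f) fps1.
Definition fps_prod (s : seq fps) : fps := foldr fps_mul fps1 s.

(* Multiplicative inverse of a series whose constant term is a unit (+-1) of int: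
   g_0 = f_0,  g_n = - f_0 * sum_{i=1..n} f_i g_{n-i}. *)
Fixpoint fps_inv_aux (f : fps) (n : nat) : seq int :=
  match n with
  | 0 => [:: f 0%N]
  | n'.+1 => let s := fps_inv_aux f n' in
             rcons s (- f 0%N * \sum_(i < n) f i.+1 * nth 0 s (n' - i)%N)
  end.
Definition fps_inv (f : fps) : fps := fun n => nth 0 (fps_inv_aux f n) n.

Definition qpoch (k : nat) : fps :=
  fps_prod [seq fps_sub fps1 (fpsX l) | l <- iota 1 k].

Definition fps_lim (s : nat -> fps) (g : fps) : Prop :=
  forall n : nat, exists M : nat, forall M' : nat, (M <= M')%N -> s M' n = g n.

(* i-th summand of the left-hand side; q^{-2i} q^{m(i^2+2i)} = q^{m(i^2+2i) - 2i} *)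
Definition lhs_term (m i : nat) : fps :=
  fps_mul (fpsX (m * (i ^ 2 + 2 * i) - 2 * i)%N)
   (fps_mul (fps_exp (fps_sub fps1 (fpsX i.+1)) 3)
     (fps_mul (fps_add fps1 (fpsX i.+1)) (fps_inv (fps_sub fps1 (fpsX 1))))).

Definition lhs_partial (m M : nat) : fps :=
  fun n => \sum_(i < M) lhs_term m i n.

(* summand for s = [:: k_1; k_2; ...; k_m] *)
Definition rhs_term (s : seq nat) : fps :=
  fps_mul (fpsX ((\sum_(x <- s) (x ^ 2 + 2 * x)) - 2 * last 0%N s)%N)
   (fps_mul (fps_exp (fps_inv (qpoch (last 0%N s))) 2)
     (fps_prod [seq fps_inv (qpoch (nth 0%N s j - nth 0%N s j.+1)%N)
               | j <- iota 0 (size s).-1])).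

Definition rhs_partial (m M : nat) : fps :=
  fun n => \sum_(t : m.-tuple 'I_M | sorted (fun a b : nat => (b <= a)%N) (map val t))
             rhs_term (map val t) n.

(* Main.v *)
Require Import Defs.
From HB Require Import structures.
From mathcomp Require Import all_boot all_order all_algebra.
From mathcomp Require Import boolp zify ring.
Set Implicit Arguments. Unset Strict Implicit. Unset Printing Implicit Defensive.
Import GRing.Theory.
Local Open Scope ring_scope.


Definition tr (N : nat) (f : fps) : {poly int} := \poly_(i < N) f i.

Lemma trM N f g k : (k < N)%N -> (tr N f * tr N g)`_k = fps_mul f g k.
Proof.
move=> kN; rewrite coefM /fps_mul; apply: eq_bigr => i _.
rewrite /tr !coef_poly.
have iN : (i < N)%N by move: (ltn_ord i); lia.
by rewrite iN ifT //; lia.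
Qed.

Lemma tr1 N : (0 < N)%N -> tr N fps1 = 1.
Proof.
move=> N0; apply/polyP => i; rewrite /tr coef_poly coef1 /fps1.
by case: i => [|i] /=; rewrite ?N0 //; case: ifP.
Qed.


Lemma trC N f k : (k < N)%N -> (tr N f)`_k = f k.
Proof. by move=> kN; rewrite /tr coef_poly kN. Qed.

Lemma mulL N f g h k : (k < N)%N ->
  fps_mul f (fps_mul g h) k = (tr N f * (tr N g * tr N h))`_k.
Proof.
move=> kN; rewrite coefM /fps_mul; apply: eq_bigr => i _.
rewrite trC; last by move: (ltn_ord i); lia.
by rewrite trM //; lia.
Qed.

Lemma mulR N f g h k : (k < N)%N ->
  fps_mul (fps_mul f g) h k = ((tr N f * tr N g) * tr N h)`_k.
Proof.
move=> kN; rewrite coefM /fps_mul; apply: eq_bigr => i _.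
rewrite (@trC _ h); last by lia.
by rewrite trM //; move: (ltn_ord i); lia.
Qed.

Lemma fps_mulA f g h : fps_mul f (fps_mul g h) = fps_mul (fps_mul f g) h.
Proof.
apply: functional_extensionality_dep => n.
by rewrite (mulL (N := n.+1)) // (mulR (N := n.+1)) // mulrA.
Qed.

Lemma fps_mulC f g : fps_mul f g = fps_mul g f.
Proof.
apply: functional_extensionality_dep => n.
by rewrite -(trM (N := n.+1)) // -(trM (N := n.+1)) // mulrC.
Qed.

Lemma fps_mul1 f : fps_mul fps1 f = f.
Proof.
apply: functional_extensionality_dep => n.
by rewrite -(trM (N := n.+1)) // tr1 // mul1r trC.
Qed.

Lemma fps_mulDl f g h : fps_mul (fps_add f g) h = fps_add (fps_mul f h) (fps_mul g h).
Proof.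
apply: functional_extensionality_dep => n.
by rewrite /fps_add /fps_mul -big_split; apply: eq_bigr => i _; rewrite mulrDl.
Qed.

Lemma int_sq1 (x y : int) : y * x = 1 -> x * x = 1.
Proof. move=> H.
have [h|[h|h]] : (y <= -1) \/ (y = 0) \/ (1 <= y) by lia;
have [h3|[h3|h3]] : (x <= -1) \/ (x = 0) \/ (1 <= x) by lia.
all: nia.
Qed.

Lemma aux_size f n : size (fps_inv_aux f n) = n.+1.
Proof. by elim: n => [|n IH] //=; rewrite size_rcons IH. Qed.

Lemma aux_prefix f n k : (k <= n)%N -> nth 0 (fps_inv_aux f n) k = fps_inv f k.
Proof.
elim: n => [|n IH]; first by rewrite leqn0 => /eqP ->.
rewrite leq_eqVlt => /orP [/eqP -> //|kn].
by rewrite /= nth_rcons aux_size kn IH.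
Qed.

Lemma inv_rec f n : fps_inv f n.+1 = - f 0%N * \sum_(i < n.+1) f i.+1 * fps_inv f (n - i)%N.
Proof.
rewrite /fps_inv /= nth_rcons aux_size ltnn eqxx; congr (_ * _).
by apply: eq_bigr => i _; rewrite aux_prefix // leq_subr.
Qed.

Lemma mul_inv f : f 0%N * f 0%N = 1 -> fps_mul f (fps_inv f) = fps1.
Proof.
move=> f0; apply: functional_extensionality_dep => n.
case: n => [|n]; first by rewrite /fps_mul big_ord1.
rewrite /fps_mul big_ord_recl subn0 inv_rec /fps1 /=.
rewrite mulrA mulrN f0 mulN1r addrC; apply/eqP; rewrite subr_eq0; apply/eqP.
by apply: eq_bigr => i _; rewrite subSS.
Qed.

Definition S := fps.
HB.instance Definition _ := Choice.on S.

Definition fps0 : S := fun _ => 0.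
Definition fps_opp (f : S) : S := fun n => - f n.

Lemma fps_addA : associative (fps_add : S -> S -> S).
Proof. by move=> f g h; apply: functional_extensionality_dep => n; rewrite /fps_add addrA. Qed.
Lemma fps_addC : commutative (fps_add : S -> S -> S).
Proof. by move=> f g; apply: functional_extensionality_dep => n; rewrite /fps_add addrC. Qed.
Lemma fps_add0 : left_id fps0 (fps_add : S -> S -> S).
Proof. by move=> f; apply: functional_extensionality_dep => n; rewrite /fps_add add0r. Qed.
Lemma fps_addN : left_inverse fps0 fps_opp (fps_add : S -> S -> S).
Proof. by move=> f; apply: functional_extensionality_dep => n; rewrite /fps_add addNr. Qed.

HB.instance Definition _ := GRing.isZmodule.Build S fps_addA fps_addC fps_add0 fps_addN.

Lemma fps1_neq0 : (fps1 : S) != 0.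
Proof. apply/eqP => /(congr1 (fun f : S => f 0%N)); rewrite /fps1 /=. by move/eqP; rewrite oner_eq0. Qed.

HB.instance Definition _ := GRing.Zmodule_isComNzRing.Build S
  (fps_mulA : associative (fps_mul : S -> S -> S)) (fps_mulC : commutative (fps_mul : S -> S -> S))
  (fps_mul1 : left_id (fps1 : S) fps_mul) (fps_mulDl : left_distributive (fps_mul : S -> S -> S) fps_add) fps1_neq0.

Definition fps_unit : {pred S} := fun f => f 0%N * f 0%N == 1.
Definition fps_invS (f : S) : S := if fps_unit f then fps_inv f else f.

Lemma fps_mulVx : {in fps_unit, left_inverse (1 : S) fps_invS *%R}.
Proof.
move=> f; rewrite /fps_unit /in_mem /= => /eqP f0; rewrite /fps_invS /fps_unit f0 eqxx.
by rewrite [LHS]fps_mulC mul_inv.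
Qed.

Lemma fps_unitPl (f g : S) : g * f = 1 -> fps_unit f.
Proof.
move=> /(congr1 (fun h : S => h 0%N)) H.
rewrite /fps_unit; apply/eqP; apply: (@int_sq1 _ (g 0%N)).
by move: H; rewrite /GRing.mul /= /fps_mul big_ord1.
Qed.

Lemma fps_invr_out : {in [predC fps_unit], fps_invS =1 id}.
Proof. move=> f; rewrite inE /= /fps_invS. rewrite /in_mem /=. by case: (fps_unit f). Qed.

HB.instance Definition _ := GRing.ComNzRing_hasMulInverse.Build S fps_mulVx fps_unitPl fps_invr_out.


Definition q : S := fpsX 1.

Definition sp (a t : nat) : S := \prod_(i < t) (1 - q ^+ (a + i)).

Fixpoint qbin (d j : nat) : S :=
  match d, j with
  | _, 0 => 1
  | 0, _.+1 => 0
  | d'.+1, j'.+1 => q ^+ j'.+1 * qbin d' j'.+1 + qbin d' j'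
  end.

Lemma qbinS d j : qbin d.+1 j = q ^+ j * qbin d j + (if j is j'.+1 then qbin d j' else 0).
Proof. by case: j => [|j] //=; rewrite expr0 mul1r addr0; case: d. Qed.

Lemma qbin_gt d j : (d < j)%N -> qbin d j = 0.
Proof.
elim: d j => [|d IH] [|j] //= H.
by rewrite !IH ?mulr0 ?addr0 //; lia.
Qed.

Lemma spS a t : sp a t.+1 = (1 - q ^+ a) * sp a.+1 t.
Proof.
rewrite /sp big_ord_recl addn0; congr (_ * _); apply: eq_bigr => i _.
by rewrite addSnnS.
Qed.

Definition T (d c : nat) : S :=
  \sum_(j < d.+1) qbin d j * q ^+ (j * j + c * j) * sp (c + j).+1 (d - j).

Lemma T0 c : T 0 c = 1.
Proof. by rewrite /T big_ord1 /= /sp big_ord0 !muln0 addn0 expr0 !mulr1. Qed.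

Lemma TS d c : T d.+1 c = T d c.+1.
Proof.
rewrite /T.
under eq_bigr => j _ do rewrite qbinS mulrDl mulrDl.
rewrite big_split /=.
rewrite [X in X + _]big_ord_recr /= qbin_gt // mulr0 !mul0r addr0.
rewrite [X in _ + X]big_ord_recl /= !mul0r add0r.
apply/eqP; rewrite eq_sym -subr_eq eq_sym; apply/eqP; rewrite -sumrB; apply: eq_bigr => i _ /=.
have -> : (d.+1 - i = (d - i).+1)%N by move: (ltn_ord i); lia.
rewrite spS /bump /= add0n.
have -> : ((c + i).+2 = (c.+1 + i).+1)%N by lia.
have -> : ((c + (1 + i)).+1 = (c.+1 + i).+1)%N by lia.
have -> : ((1 + i) * (1 + i) + c * (1 + i) = i * i + c.+1 * i + (c + i).+1)%N by lia.
have -> : (i * i + c.+1 * i = i + (i * i + c * i))%N by lia.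
have -> : (d.+1 - (1 + i) = d - i)%N by lia.
rewrite !exprD; ring.
Qed.

Lemma T1 d c : T d c = 1.
Proof. by elim: d c => [|d IH] c; rewrite ?T0 // TS IH. Qed.

Lemma fcoefXM a (f : S) n : fps_mul (fpsX a) f n = if (a <= n)%N then f (n - a)%N else 0.
Proof.
rewrite -(trM (N := n.+1)) //.
case: (leqP a n) => H.
  have -> : tr n.+1 (fpsX a) = 'X^a.
    apply/polyP => i; rewrite /tr coef_poly coefXn /fpsX.
    case: (ltnP i n.+1) => // iH; rewrite eq_sym; case: eqP => //; lia.
  rewrite coefXnM ltnNge H /= trC //; lia.
have -> : tr n.+1 (fpsX a) = 0.
  apply/polyP => i; rewrite /tr coef_poly coef0 /fpsX.
  case: (ltnP i n.+1) => // iH; case: eqP => //; lia.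
by rewrite mul0r coef0.
Qed.

Lemma fpsXE k : fpsX k = q ^+ k.
Proof.
elim: k => [|k IH]; first by [].
rewrite exprS -IH; apply: functional_extensionality_dep => n.
rewrite [RHS]/GRing.mul /= fcoefXM /fpsX.
by case: n => [|n] //=; rewrite subn1 /= eqSS.
Qed.

Lemma qXM a (f : S) n : (q ^+ a * f) n = if (a <= n)%N then f (n - a)%N else 0.
Proof. by rewrite -fpsXE; apply: fcoefXM. Qed.

Lemma fps_expE (f : S) k : fps_exp f k = f ^+ k.
Proof. by elim: k => [|k IH] //=; rewrite IH exprS. Qed.

Lemma fps_prodE (s : seq S) : fps_prod s = \prod_(x <- s) x.
Proof. by elim: s => [|x s IH]; rewrite ?big_nil ?big_cons //= IH. Qed.

Lemma sp_add a t1 t2 : sp a (t1 + t2) = sp a t1 * sp (a + t1) t2.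
Proof.
rewrite /sp big_split_ord /=; congr (_ * _); apply: eq_bigr => i _.
by rewrite addnA.
Qed.

Definition qpS k := sp 1 k.

Lemma qpochE k : qpoch k = qpS k.
Proof.
rewrite /qpoch fps_prodE big_map /qpS /sp.
rewrite -(subn0 k) -{1}(addn0 1%N) iotaDl big_map.
rewrite [in RHS]subn0 -(big_mkord xpredT (fun i => 1 - q ^+ (1 + i))) /index_iota subn0.
by apply: eq_bigr => i _; rewrite fpsXE.
Qed.

Definition eqN N (f g : S) := forall i, (i <= N)%N -> f i = g i.

Lemma eqN_refl N f : eqN N f f. Proof. by []. Qed.
Lemma eqN_sym N f g : eqN N f g -> eqN N g f.
Proof. by move=> H i Hi; rewrite H. Qed.
Lemma eqN_trans N f g h : eqN N f g -> eqN N g h -> eqN N f h.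
Proof. by move=> H1 H2 i Hi; rewrite H1 ?H2. Qed.
Lemma eqN_add N f f' g g' : eqN N f f' -> eqN N g g' -> eqN N (f + g) (f' + g').
Proof. by move=> H1 H2 i Hi; rewrite /GRing.add /= /fps_add H1 ?H2. Qed.
Lemma eqN_opp N f f' : eqN N f f' -> eqN N (- f) (- f').
Proof. by move=> H1 i Hi; rewrite /GRing.opp /= /fps_opp H1. Qed.
Lemma eqN_mul N f f' g g' : eqN N f f' -> eqN N g g' -> eqN N (f * g) (f' * g').
Proof.
move=> H1 H2 i Hi; rewrite /GRing.mul /= /fps_mul; apply: eq_bigr => j _.
rewrite H1 ?H2 //; move: (ltn_ord j); lia.
Qed.
Lemma eqN_sum N (I : Type) (r : seq I) (P : pred I) (F G : I -> S) :
  (forall i, P i -> eqN N (F i) (G i)) ->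
  eqN N (\sum_(i <- r | P i) F i) (\sum_(i <- r | P i) G i).
Proof.
move=> H; elim/big_rec2: _ => [|i x y Pi Hxy]; first exact: eqN_refl.
exact: eqN_add (H i Pi) Hxy.
Qed.
Lemma eqN_prod N (I : Type) (r : seq I) (P : pred I) (F G : I -> S) :
  (forall i, P i -> eqN N (F i) (G i)) ->
  eqN N (\prod_(i <- r | P i) F i) (\prod_(i <- r | P i) G i).
Proof.
move=> H; elim/big_rec2: _ => [|i x y Pi Hxy]; first exact: eqN_refl.
exact: eqN_mul (H i Pi) Hxy.
Qed.
Lemma eqN_qX N a f : (N < a)%N -> eqN N (q ^+ a * f) 0.
Proof. by move=> H i Hi; rewrite qXM ifF //; apply/negbTE; rewrite -ltnNge; lia. Qed.
Lemma eqN_le N M f g : (M <= N)%N -> eqN N f g -> eqN M f g.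
Proof. by move=> H E i Hi; apply: E; lia. Qed.

Lemma coef0M (f g : S) : (f * g) 0%N = f 0%N * g 0%N.
Proof. by rewrite /GRing.mul /= /fps_mul big_ord1. Qed.

Lemma coef0_sp a t : (0 < a)%N -> (sp a t) 0%N = 1.
Proof.
move=> a0; rewrite /sp; elim/big_rec: _ => [|i x _ Hx] //.
rewrite coef0M Hx mulr1 /GRing.add /= /fps_add /fps_opp -fpsXE /fpsX /=.
rewrite /GRing.opp /= /fps_opp /=.
have -> : (0 == a + i)%N = false by apply/negbTE; rewrite eq_sym -lt0n; lia.
by rewrite oppr0 addr0.
Qed.

Lemma unitS (f : S) : f 0%N * f 0%N = 1 -> f \is a GRing.unit.
Proof. move=> H; change (fps_unit f); by rewrite /fps_unit H. Qed.

Lemma unit_sp a t : (0 < a)%N -> sp a t \is a GRing.unit.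
Proof. by move=> a0; apply: unitS; rewrite coef0_sp // mulr1. Qed.

Lemma unit_qpS k : qpS k \is a GRing.unit.
Proof. exact: unit_sp. Qed.

Lemma fps_invE (f : S) : f \is a GRing.unit -> fps_inv f = f^-1.
Proof. by move=> H; change (fps_inv f = fps_invS f); rewrite /fps_invS; change (is_true (fps_unit f)) in H; by rewrite H. Qed.

Lemma eqN_inv N (f g : S) : f \is a GRing.unit -> g \is a GRing.unit -> eqN N f g -> eqN N f^-1 g^-1.
Proof.
move=> uf ug E.
have -> : f^-1 = g^-1 + f^-1 * g^-1 * (g - f).
  by rewrite mulrBr -mulrA mulVr // mulr1 mulrAC mulVr // mul1r addrC subrK.
have : eqN N (f^-1 * g^-1 * (g - f)) (f^-1 * g^-1 * 0).
  apply: eqN_mul => //; move=> i Hi; rewrite /GRing.add /= /fps_add /GRing.opp /= /fps_opp E //.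
  by rewrite subrr.
rewrite mulr0 => E2 i Hi; rewrite /GRing.add /= /fps_add E2 //.
by rewrite addr0.
Qed.

Lemma sp1 a : sp a 1 = 1 - q ^+ a.
Proof. by rewrite /sp big_ord1 addn0. Qed.

Lemma qpSS k : qpS k.+1 = qpS k * (1 - q ^+ k.+1).
Proof. by have := sp_add 1 k 1; rewrite addn1 sp1 add1n. Qed.

Lemma qpS_add a t : qpS (a + t) = qpS a * sp a.+1 t.
Proof. by rewrite /qpS sp_add add1n. Qed.

Lemma qpS0 : qpS 0 = 1.
Proof. by rewrite /qpS /sp big_ord0. Qed.

Lemma qbinE d j : (j <= d)%N -> qbin d j * qpS j * qpS (d - j) = qpS d.
Proof.
elim: d j => [|d IH] [|j] //=.
- by move=> _; rewrite qpS0 !mulr1.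
- by move=> _; rewrite qpS0 !mul1r ?subn0.
move=> jd.
have [jd'|jd'] := ltnP j d.
  have E1 := IH j.+1 jd'. have E2 := IH j (ltnW jd').
  have -> : (d.+1 - j.+1 = (d - j.+1).+1)%N by lia.
  have e3 : (d - j = (d - j.+1).+1)%N by lia.
  rewrite e3 qpSS in E2. rewrite qpSS in E1. rewrite !qpSS.
  have Eq : q ^+ d.+1 = q ^+ j.+1 * q ^+ (d - j.+1).+1 by rewrite -exprD; congr (_ ^+ _); lia.
  rewrite Eq.
  set A := qbin d j.+1 in E1 *. set B := qbin d j in E2 *.
  set Pj := qpS j in E1 E2 *. set Pd := qpS (d - j.+1) in E1 E2 *.
  set x := q ^+ j.+1 in E1 E2 *. set y := q ^+ (d - j.+1).+1 in E2 *.
  apply/eqP; rewrite -subr_eq0; apply/eqP.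
  have -> : (x * A + B) * (Pj * (1 - x)) * (Pd * (1 - y)) - qpS d * (1 - x * y)
     = x * (1 - y) * (A * (Pj * (1 - x)) * Pd - qpS d) + (1 - x) * (B * Pj * (Pd * (1 - y)) - qpS d) by ring.
  by rewrite E1 E2 !subrr !mulr0 addr0.
have jd2 : j = d by lia.
subst j.
rewrite qbin_gt // mulr0 add0r subnn qpS0 mulr1 qpSS.
by rewrite mulrA; have := IH d (leqnn d); rewrite subnn qpS0 mulr1 => ->.
Qed.

Definition u k : S := (qpS k)^-1.

Lemma uK k : qpS k * u k = 1.
Proof. by rewrite /u mulrV // unit_qpS. Qed.

Lemma qbinU d j : (j <= d)%N -> qbin d j = qpS d * u j * u (d - j).
Proof.
move=> jd; rewrite -(qbinE jd).
have H1 := uK j; have H2 := uK (d - j).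
set a := qbin d j in H1 H2 *.
transitivity (a * (qpS j * u j) * (qpS (d - j) * u (d - j))); first by rewrite H1 H2 !mulr1.
ring.
Qed.

Lemma spU a t : sp a.+1 t = qpS (a + t) * u a.
Proof.
rewrite qpS_add.
have H1 := uK a.
transitivity (sp a.+1 t * (qpS a * u a)); first by rewrite H1 mulr1.
ring.
Qed.

Lemma step d c : \sum_(j < d.+1) q ^+ (j * j + c * j) * u (d - j) * u j * u (c + j) = u d * u (c + d).
Proof.
have := T1 d c; rewrite /T (eq_bigr (fun j : 'I_d.+1 => qpS d * qpS (c + d) * (q ^+ (j * j + c * j) * u (d - j) * u j * u (c + j)))); last first.
  move=> j _.
  rewrite qbinU; last by move: (ltn_ord j); lia.
  rewrite spU.
  have -> : (c + j + (d - j) = c + d)%N by move: (ltn_ord j); lia.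
  ring.
rewrite -mulr_sumr.
set X := \sum_(i < d.+1) _.
move=> H.
have H1 := uK d; have H2 := uK (c + d).
transitivity (X * (qpS d * u d) * (qpS (c + d) * u (c + d))); first by rewrite H1 H2 !mulr1.
transitivity (qpS d * qpS (c + d) * X * u d * u (c + d)); first by ring.
by rewrite H mul1r.
Qed.

Lemma uS k : u k = (1 - q ^+ k.+1) * u k.+1.
Proof.
have H := uK k.+1; rewrite qpSS in H.
transitivity (u k * (qpS k * (1 - q ^+ k.+1) * u k.+1)); first by rewrite H mulr1.
have H2 := uK k.
transitivity ((qpS k * u k) * (1 - q ^+ k.+1) * u k.+1); first by ring.
by rewrite H2 mul1r.
Qed.

Definition w r : S := (1 - q ^+ r.+1) ^+ 3 * (1 + q ^+ r.+1) * u 1.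

Definition F n r : S := q ^+ (2 * (n - r)) * w r * qpS n ^+ 2 * u (n - r) * u (n + r + 2).
Definition G n r : S := - (q ^+ (2 * (n.+1 - r)) * (1 - q ^+ r.+1) ^+ 2 * (1 - q ^+ r) ^+ 2 * u 1
   * qpS n ^+ 2 * u (n.+1 - r) * u (n + r + 2)).

Lemma WZ1 r d : F (r + d).+1 r - F (r + d) r = G (r + d) r.+1 - G (r + d) r.
Proof.
rewrite /F /G /w.
have -> : ((r + d).+1 - r = d.+1)%N by lia.
have -> : ((r + d) - r = d)%N by lia.
have -> : ((r + d).+1 - r.+1 = d)%N by lia.
have -> : ((r + d).+1 + r + 2 = (r + d + r + 2).+1)%N by lia.
have -> : ((r + d) + r.+1 + 2 = (r + d + r + 2).+1)%N by lia.
rewrite qpSS (uS d) (uS (r + d + r + 2)).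
have -> : (2 * d.+1 = d + d + 2)%N by lia.
have -> : (2 * d = d + d)%N by lia.
have -> : ((r + d + r + 2).+1 = r + r + d + 3)%N by lia.
have -> : ((r + d).+1 = r + d + 1)%N by lia.
have -> : (r.+1 = r + 1)%N by lia.
have -> : (d.+1 = d + 1)%N by lia.
rewrite !exprD.
have -> : ((r + 1).+1 = r + 2)%N by lia.
rewrite !exprD. ring.
Qed.

Lemma WZ2 n : F n.+1 n.+1 = - G n n.+1.
Proof.
rewrite /F /G /w opprK !subnn qpSS.
have -> : (n.+1 + n.+1 + 2 = (n + n.+1 + 2).+1)%N by lia.
rewrite (uS (n + n.+1 + 2)).
have -> : ((n + n.+1 + 2).+1 = n + n + 4)%N by lia.
have -> : (n.+2 = n + 2)%N by lia.
have -> : (n.+1 = n + 1)%N by lia.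
rewrite !muln0 !exprD; ring.
Qed.

Lemma G0 n : G n 0 = 0.
Proof. by rewrite /G expr0 subrr expr0n /= !mulr0 !mul0r oppr0. Qed.

Lemma u0 : u 0 = 1.
Proof. by rewrite /u qpS0 invr1. Qed.

Lemma F00 : F 0 0 = 1.
Proof.
rewrite /F /w subnn muln0 expr0 mul1r qpS0 expr1n mulr1 u0 mulr1 add0n.
have H1 := uK 1; have H2 := uK 2.
have E : (1 - q ^+ 1) ^+ 3 * (1 + q ^+ 1) = qpS 1 * qpS 2.
  rewrite !qpSS qpS0; ring.
rewrite E; transitivity ((qpS 1 * u 1) * (qpS 2 * u 2)); first by ring.
by rewrite H1 H2 mulr1.
Qed.

Lemma base n : \sum_(r < n.+1) F n r = 1.
Proof.
elim: n => [|n IH]; first by rewrite big_ord1 F00.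
rewrite big_ord_recr /= WZ2.
have -> : \sum_(i < n.+1) F n.+1 i = \sum_(i < n.+1) (F n i + (G n i.+1 - G n i)).
  apply: eq_bigr => i _.
  have := WZ1 i (n - i).
  have -> : (i + (n - i) = n)%N by move: (ltn_ord i); lia.
  by move=> <-; rewrite addrC subrK.
rewrite big_split /= IH.
have -> : \sum_(i < n.+1) (G n i.+1 - G n i) = G n n.+1 - G n 0.
  by rewrite -(big_mkord xpredT (fun i => G n i.+1 - G n i)) telescope_sumr.
by rewrite G0 subr0 -addrA subrr addr0.
Qed.

Lemma tri_exchange N (A : nat -> nat -> S) :
  \sum_(k < N) \sum_(r < k.+1) A k r = \sum_(r < N) \sum_(j < N - r) A (r + j)%N r.
Proof.
elim: N => [|N IH]; first by rewrite !big_ord0.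
rewrite big_ord_recr /= IH.
rewrite [RHS](eq_bigr (fun r : 'I_N.+1 => \sum_(j < N - r) A (r + j)%N r + A N r)); last first.
  move=> r _; have -> : (N.+1 - r = (N - r).+1)%N by move: (ltn_ord r); lia.
  rewrite big_ord_recr /=; congr (_ + A _ _); move: (ltn_ord r); lia.
rewrite big_split /= [X in _ = X + _]big_ord_recr /= subnn big_ord0 addr0.
by [].
Qed.

Lemma gen_step (c : nat -> S) n :
  \sum_(r < n.+1) c r * \sum_(j < n.+1 - r) q ^+ (j * j + (2 * r + 2) * j) * u (n - r - j) * u j * u (2 * r + 2 + j)
  = \sum_(r < n.+1) c r * (u (n - r) * u (n + r + 2)).
Proof.
apply: eq_bigr => r _.
have -> : (n.+1 - r = (n - r).+1)%N by move: (ltn_ord r); lia.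
rewrite step; congr (_ * (_ * u _)); move: (ltn_ord r); lia.
Qed.

Lemma chain_step (c : nat -> S) n :
  \sum_(k < n.+1) q ^+ (k * k + 2 * k) * u (n - k) * \sum_(r < k.+1) c r * u (k - r) * u (k + r + 2)
  = \sum_(r < n.+1) c r * q ^+ (r * r + 2 * r) * u (n - r) * u (n + r + 2).
Proof.
under eq_bigr => k _ do rewrite mulr_sumr.
rewrite (tri_exchange n.+1 (fun k r => q ^+ (k * k + 2 * k) * u (n - k) * (c r * u (k - r) * u (k + r + 2)))).
transitivity (\sum_(r < n.+1) (c r * q ^+ (r * r + 2 * r)) * \sum_(j < n.+1 - r) q ^+ (j * j + (2 * r + 2) * j) * u (n - r - j) * u j * u (2 * r + 2 + j)).
  apply: eq_bigr => r _; rewrite mulr_sumr; apply: eq_bigr => j _.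
  have -> : ((r + j) * (r + j) + 2 * (r + j) = (r * r + 2 * r) + (j * j + (2 * r + 2) * j))%N by lia.
  have -> : (n - (r + j) = n - r - j)%N by lia.
  have -> : (r + j - r = j)%N by lia.
  have -> : (r + j + r + 2 = 2 * r + 2 + j)%N by lia.
  rewrite exprD; ring.
rewrite (gen_step (fun r => c r * q ^+ (r * r + 2 * r))); apply: eq_bigr => r _; ring.
Qed.

Lemma uk2 k : u k ^+ 2 = \sum_(r < k.+1) q ^+ (2 * (k - r)) * w r * u (k - r) * u (k + r + 2).
Proof.
have := base k; rewrite /F => H.
transitivity (u k ^+ 2 * \sum_(r < k.+1) q ^+ (2 * (k - r)) * w r * qpS k ^+ 2 * u (k - r) * u (k + r + 2)).
  by rewrite H mulr1.
rewrite mulr_sumr; apply: eq_bigr => r _.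
have H1 := uK k.
transitivity ((qpS k * u k) ^+ 2 * (q ^+ (2 * (k - r)) * w r * u (k - r) * u (k + r + 2))); first by ring.
by rewrite H1 expr1n mul1r.
Qed.

Lemma chain_base n :
  \sum_(k < n.+1) q ^+ (k * k) * u (n - k) * u k ^+ 2
  = \sum_(r < n.+1) q ^+ (r * r) * w r * (u (n - r) * u (n + r + 2)).
Proof.
under eq_bigr => k _ do rewrite uk2 mulr_sumr.
rewrite (tri_exchange n.+1 (fun k r => q ^+ (k * k) * u (n - k) * (q ^+ (2 * (k - r)) * w r * u (k - r) * u (k + r + 2)))).
rewrite -(gen_step (fun r => q ^+ (r * r) * w r)).
apply: eq_bigr => r _; rewrite mulr_sumr; apply: eq_bigr => j _.
have -> : ((r + j) * (r + j) = (r * r) + j * j + 2 * r * j)%N by lia.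
have -> : (2 * (r + j - r) = 2 * j)%N by lia.
have -> : (n - (r + j) = n - r - j)%N by lia.
have -> : (r + j - r = j)%N by lia.
have -> : (r + j + r + 2 = 2 * r + 2 + j)%N by lia.
have -> : ((2 * r + 2) * j = 2 * r * j + 2 * j)%N by lia.
rewrite !exprD; ring.
Qed.


Fixpoint CS (m b : nat) (F : seq nat -> S) : S :=
  if m is mm.+1 then \sum_(k < b) CS mm k.+1 (fun s => F (nat_of_ord k :: s)) else F [::].

Lemma tupCS m M b (F : seq nat -> S) : (b <= M)%N ->
  \sum_(t : m.-tuple 'I_M | sorted (fun a b : nat => (b <= a)%N) (map val t) && all (fun x => x < b)%N (map val t))
     F (map val t) = CS m b F.
Proof.
elim: m b F => [|m IH] b F bM /=.
  rewrite (eq_bigl (fun t => t == [tuple])); last by move=> t; rewrite tuple0 eqxx.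
  by rewrite big_pred1_eq.
rewrite (reindex (fun p : 'I_M * m.-tuple 'I_M => [tuple of p.1 :: p.2])) /=; last first.
  exists (fun t => (thead t, [tuple of behead t])).
    by move=> [x t] _ /=; rewrite theadE; congr (_, _); apply: val_inj.
  by move=> t _; rewrite -tuple_eta.
rewrite (eq_bigl (fun p : 'I_M * m.-tuple 'I_M => (p.1 < b)%N &&
   (sorted (fun a b : nat => (b <= a)%N) (map val p.2) && all (fun x => x < p.1.+1)%N (map val p.2)))); last first.
  move=> [x t] /=.
  rewrite (path_sortedE (leT := fun a b : nat => (b <= a)%N)); last by move=> a c d /= H1 H2; lia.
  case: (ltnP x b) => xb /=; last by rewrite andbF.
  set s := [seq nat_of_ord i | i <- t].
  have E : all (fun y => y <= x)%N s = all (fun y => y < x.+1)%N s by apply: eq_all => y /=; rewrite ltnS.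
  rewrite E.
  case Hs: (all (fun y => y < x.+1)%N s); last by rewrite /= andbF.
  have -> : all (fun x0 : nat => (x0 < b)%N) s.
    by apply/allP => y /(allP Hs) /=; lia.
  by rewrite andbT.
rewrite -(pair_big_dep (fun k : 'I_M => (k < b)%N) (fun k (t : m.-tuple 'I_M) => sorted (fun a b : nat => (b <= a)%N) (map val t) && all (fun x => x < k.+1)%N (map val t)) (fun k (t : m.-tuple 'I_M) => F (val k :: map val t))).
rewrite (eq_bigr (fun k : 'I_M => CS m k.+1 (fun s => F (val k :: s)))); last first.
  by move=> k _; rewrite (IH k.+1 (fun s => F (val k :: s))) // ltn_ord.
by rewrite big_ord_narrow.
Qed.


Definition esum (s : seq nat) : nat := (\sum_(x <- s) (x * x + 2 * x))%N.

Definition rt (s : seq nat) : S :=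
  q ^+ (esum s - 2 * last 0%N s) * (u (last 0%N s) ^+ 2 *
     \prod_(j <- iota 0 (size s).-1) u (nth 0%N s j - nth 0%N s j.+1)).

Lemma mulE (f g : fps) : fps_mul f g = (f : S) * (g : S).
Proof. by []. Qed.
Lemma addE (f g : fps) : fps_add f g = (f : S) + (g : S).
Proof. by []. Qed.
Lemma subE (f g : fps) : fps_sub f g = (f : S) - (g : S).
Proof. by []. Qed.
Lemma oneE : fps1 = (1 : S).
Proof. by []. Qed.

Lemma invq k : fps_inv (qpoch k) = u k.
Proof. by rewrite qpochE fps_invE // unit_qpS. Qed.

Lemma rhs_termE s : rhs_term s = rt s.
Proof.
rewrite /rhs_term /rt !mulE.
rewrite fps_prodE big_map fps_expE invq fpsXE.
have -> : (\sum_(x <- s) (x ^ 2 + 2 * x) = esum s)%N.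
  by rewrite /esum; apply: eq_bigr => x _; rewrite -mulnn.
congr (q ^+ _ * (_ * _)).
by apply: eq_bigr => j _; rewrite invq.
Qed.

Lemma esum_cons k s : esum (k :: s) = (k * k + 2 * k + esum s)%N.
Proof. by rewrite /esum big_cons. Qed.

Lemma last_le y s : (2 * last y s <= y * y + 2 * y + esum s)%N.
Proof.
elim: s y => [|z s IH] y /=; first by rewrite /esum big_nil; lia.
rewrite esum_cons; have := IH z; lia.
Qed.

Lemma rt1 k : rt [:: k] = q ^+ (k * k) * u k ^+ 2.
Proof.
rewrite /rt /= big_nil mulr1 esum_cons /esum big_nil.
by congr (q ^+ _ * _); lia.
Qed.

Lemma rt_cons k s : s != [::] -> rt (k :: s) = q ^+ (k * k + 2 * k) * u (k - head 0%N s) * rt s.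
Proof.
case: s => [//|y s] _.
rewrite /rt esum_cons.
have -> : last 0%N (k :: y :: s) = last 0%N (y :: s) by [].
have Hl := last_le y s.
have -> : last 0%N (y :: s) = last y s by [].
have -> : (k * k + 2 * k + esum (y :: s) - 2 * last y s = (k * k + 2 * k) + (esum (y :: s) - 2 * last y s))%N.
  by rewrite esum_cons addnBA.
rewrite exprD.
have -> : (size (k :: y :: s)).-1 = (size s).+1 by [].
have -> : (size (y :: s)).-1 = (size s) by [].
rewrite [iota 0 _]/= big_cons.
rewrite (iotaDl 1 0) big_map /=.
ring.
Qed.

Lemma CS_ext m b (F F' : seq nat -> S) :
  (forall s, size s = m -> F s = F' s) -> CS m b F = CS m b F'.
Proof.
elim: m b F F' => [|m IH] b F F' H /=; first exact: H.
apply: eq_bigr => k _; apply: IH => s Hs; apply: H; by rewrite /= Hs.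
Qed.

Lemma CS_scale m b c (F : seq nat -> S) : CS m b (fun s => c * F s) = c * CS m b F.
Proof.
elim: m b F => [|m IH] b F //=.
rewrite mulr_sumr; apply: eq_bigr => k _; exact: IH.
Qed.

Lemma CS_S m b F : CS m.+1 b F = \sum_(k < b) CS m k.+1 (fun s => F (nat_of_ord k :: s)).
Proof. by []. Qed.

Definition Gc (m n : nat) : S := CS m.+1 n.+1 (fun s => u (n - head 0%N s) * rt s).

Definition cc (m r : nat) : S := q ^+ (m * (r * r + 2 * r)) * (q ^+ (r * r) * w r).

Lemma Gc0 n : Gc 0 n = \sum_(k < n.+1) q ^+ (k * k) * u (n - k) * u k ^+ 2.
Proof. rewrite /Gc /=; apply: eq_bigr => k _; rewrite rt1; ring. Qed.

Lemma GcS m n : Gc m.+1 n = \sum_(k < n.+1) q ^+ (k * k + 2 * k) * u (n - k) * Gc m k.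
Proof.
rewrite /Gc CS_S; apply: eq_bigr => k _.
rewrite -CS_scale; apply: CS_ext => s Hs.
rewrite /= rt_cons; last by rewrite -size_eq0 Hs.
ring.
Qed.

Lemma Gc_closed m n : Gc m n = \sum_(r < n.+1) cc m r * (u (n - r) * u (n + r + 2)).
Proof.
elim: m n => [|m IH] n.
  rewrite Gc0 chain_base; apply: eq_bigr => r _; rewrite /cc mul0n expr0 mul1r; ring.
rewrite GcS.
under eq_bigr => k _ do rewrite IH.
have := chain_step (cc m) n.
under [X in X = _ -> _]eq_bigr => k _ do under eq_bigr => r _ do rewrite -mulrA.
move=> ->; apply: eq_bigr => r _.
rewrite /cc (mulSn m) !exprD; ring.
Qed.

Lemma fcoef_sum (I : Type) (r : seq I) (P : pred I) (F : I -> S) n :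
  (\sum_(i <- r | P i) F i) n = \sum_(i <- r | P i) F i n.
Proof.
elim/big_rec2: _ => [|i x y Pi <-] //.
Qed.

Definition RH (m M : nat) : S :=
  \sum_(k < M) \sum_(r < k.+1) q ^+ (k * k + 2 * (k - r)) * (q ^+ (m * (r * r + 2 * r)) * w r) * (u (k - r) * u (k + r + 2)).

Lemma CS_RH m M : CS m.+1 M rt = RH m M.
Proof.
rewrite /RH CS_S; apply: eq_bigr => k _.
case: m => [|m].
  rewrite /= rt1 uk2 mulr_sumr; apply: eq_bigr => r _.
  rewrite mul0n expr0 mul1r exprD; ring.
rewrite (@CS_ext _ _ _ (fun s => (q ^+ (k * k + 2 * k)) * (u (k - head 0%N s) * rt s))); last first.
  move=> s Hs; rewrite rt_cons; last by rewrite -size_eq0 Hs.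
  ring.
rewrite CS_scale -/(Gc m k) Gc_closed mulr_sumr; apply: eq_bigr => r _.
rewrite /cc.
have Hr : (r <= k)%N by move: (ltn_ord r); lia.
set a := (r * r)%N. set b := (m * (a + 2 * r))%N.
have -> : (m.+1 * (a + 2 * r) = b + a + 2 * r)%N by rewrite mulSn /b; lia.
have -> : (k * k + 2 * k = k * k + 2 * (k - r) + 2 * r)%N by lia.
rewrite !exprD; ring.
Qed.

Lemma rhsE m M n : (0 < m)%N -> rhs_partial m M n = RH m.-1 M n.
Proof.
case: m => [//|m] _ /=.
rewrite /rhs_partial -CS_RH -(tupCS _ _ (leqnn M)).
rewrite fcoef_sum; apply: eq_big => [t|t _]; last by rewrite rhs_termE.
suff -> : all (fun x => x < M)%N (map val t) by rewrite andbT.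
by apply/allP => x /mapP [y _ ->]; apply: ltn_ord.
Qed.


Lemma eqN_stab N N' M (f : nat -> S) : (forall j, (N' <= j)%N -> eqN N (f j) 0) -> (N' <= M)%N ->
  eqN N (\sum_(j < M) f j) (\sum_(j < N') f j).
Proof.
move=> H; elim: M => [|M IH] HM.
  by have -> : N' = 0%N by lia.
case: (leqP N' M) => HM2.
  rewrite big_ord_recr /=.
  have := eqN_add (IH HM2) (H M HM2); by rewrite addr0.
by have -> : N' = M.+1 by lia.
Qed.

Lemma stab N M (f : nat -> int) : (forall j, (N <= j)%N -> f j = 0) -> (N <= M)%N ->
  \sum_(j < M) f j = \sum_(j < N) f j.
Proof.
move=> H; elim: M => [|M IH] HM.
  by have -> : N = 0%N by lia.
case: (leqP N M) => HM2.
  by rewrite big_ord_recr /= IH // H // addr0.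
by have -> : N = M.+1 by lia.
Qed.

Lemma eqN_qX' N a : (N < a)%N -> eqN N (q ^+ a) 0.
Proof. by move=> H; have := @eqN_qX N a (1 : S) H; rewrite mulr1. Qed.

Lemma eqN_sp N t : eqN N (sp N.+1 t) 1.
Proof.
rewrite /sp.
have := @eqN_prod N _ (index_enum 'I_t) xpredT (fun i : 'I_t => 1 - q ^+ (N.+1 + i)) (fun _ => 1).
rewrite big1_eq; apply=> i _.
have := eqN_add (@eqN_refl N 1) (eqN_opp (@eqN_qX' N (N.+1 + i)%N _)).
by rewrite oppr0 addr0; apply; lia.
Qed.

Lemma eqN_qpS N n : (N <= n)%N -> eqN N (qpS n) (qpS N).
Proof.
move=> H; have -> : n = (N + (n - N))%N by lia.
rewrite qpS_add; have := eqN_mul (@eqN_refl N (qpS N)) (@eqN_sp N (n - N)).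
by rewrite mulr1.
Qed.

Lemma eqN_u N n : (N <= n)%N -> eqN N (u n) (u N).
Proof. by move=> H; apply: eqN_inv; rewrite ?unit_qpS //; apply: eqN_qpS. Qed.

Definition V (r t : nat) : S := \sum_(j < t) q ^+ (j * j + (2 * r + 2) * j) * u j * u (2 * r + 2 + j).

Lemma eqN_qXM N a (f : S) : (N < a)%N -> eqN N (q ^+ a * f) 0.
Proof. exact: eqN_qX. Qed.

Lemma keyV N r : eqN N (qpS N * V r N.+1) 1.
Proof.
set c := (2 * r + 2)%N.
have E := step (N + N) c.
have E1 : eqN N (\sum_(j < (N + N).+1) q ^+ (j * j + c * j) * u (N + N - j) * u j * u (c + j))
               (u N * V r N.+1).
  apply: (eqN_trans (@eqN_stab N N.+1 (N + N).+1 (fun j : nat => q ^+ (j * j + c * j) * u (N + N - j) * u j * u (c + j)) _ _)).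
  - move=> j Hj; rewrite -!mulrA; apply: eqN_qXM; nia.
  - lia.
  rewrite /V -/c mulr_sumr; apply: eqN_sum => j _.
  have := eqN_mul (eqN_mul (@eqN_refl N (q ^+ (j * j + c * j))) (@eqN_u N (N + N - j) _)) (@eqN_refl N (u j * u (c + j))).
  rewrite !mulrA => H.
  have -> : u N * q ^+ (j * j + c * j) * u j * u (c + j) = q ^+ (j * j + c * j) * u N * u j * u (c + j) by ring.
  apply: H; move: (ltn_ord j); lia.
rewrite E in E1.
have E2 : eqN N (u N * u N) (u N * V r N.+1).
  apply: eqN_trans E1; apply: eqN_mul; apply: eqN_sym; apply: eqN_u; lia.
have E3 := eqN_mul (@eqN_refl N (qpS N * qpS N)) E2.
have H1 := uK N.
have -> : 1 = qpS N * qpS N * (u N * u N).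
  by transitivity ((qpS N * u N) * (qpS N * u N)); [rewrite H1 mulr1 | ring].
have -> : qpS N * V r N.+1 = qpS N * qpS N * (u N * V r N.+1).
  transitivity ((qpS N * u N) * (qpS N * V r N.+1)); first by rewrite H1 mul1r.
  by ring.
exact: eqN_sym.
Qed.

Lemma Vtail N r t : (N.+1 - r <= t)%N -> eqN N (q ^+ (r * r) * V r t) (q ^+ (r * r) * V r (N.+1 - r)).
Proof.
move=> Ht; rewrite /V !mulr_sumr.
apply: (@eqN_stab N (N.+1 - r) t (fun j : nat => q ^+ (r * r) * (q ^+ (j * j + (2 * r + 2) * j) * u j * u (2 * r + 2 + j)))) => // j Hj.
rewrite !mulrA -exprD -!mulrA; apply: eqN_qXM; nia.
Qed.

Lemma RH_exch m M : RH m M = \sum_(r < M) (q ^+ (m * (r * r + 2 * r)) * w r) * (q ^+ (r * r) * V r (M - r)).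
Proof.
rewrite /RH (tri_exchange M (fun k r => q ^+ (k * k + 2 * (k - r)) * (q ^+ (m * (r * r + 2 * r)) * w r) * (u (k - r) * u (k + r + 2)))).
apply: eq_bigr => r _; rewrite /V !mulr_sumr; apply: eq_bigr => j _.
have -> : ((r + j) * (r + j) + 2 * (r + j - r) = r * r + (j * j + (2 * r + 2) * j))%N by nia.
have -> : (r + j - r = j)%N by lia.
have -> : (r + j + r + 2 = 2 * r + 2 + j)%N by lia.
rewrite exprD; ring.
Qed.


Lemma sq_nat (i : nat) : (i ^ 2 = i * i)%N.
Proof. by rewrite expnS expn1. Qed.

Lemma lhs_termE m i : (lhs_term m.+1 i : S) = (q ^+ (m * (i * i + 2 * i)) * w i) * q ^+ (i * i).
Proof.
rewrite /lhs_term !mulE fps_expE subE addE oneE !fpsXE fps_invE; last first.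
  by have := unit_qpS 1; rewrite /qpS sp1.
have -> : (1 - q ^+ 1)^-1 = u 1 by rewrite /u /qpS sp1.
rewrite /w sq_nat.
have -> : (m.+1 * (i * i + 2 * i) - 2 * i = m * (i * i + 2 * i) + i * i)%N.
  rewrite mulSn; lia.
rewrite exprD; ring.
Qed.

Lemma lhs_term0 m i n : (0 < m)%N -> (n < i)%N -> lhs_term m i n = 0.
Proof.
move=> m0 ni; rewrite /lhs_term fcoefXM ifF //; apply/negbTE; rewrite -ltnNge sq_nat.
case: m m0 => [//|m] _; rewrite mulSn; nia.
Qed.

Lemma RH_stab m M n : (n < M)%N -> RH m M n = RH m n.+1 n.
Proof.
move=> nM; rewrite /RH !fcoef_sum.
apply: (@stab n.+1 M (fun k => (\sum_(r < k.+1) q ^+ (k * k + 2 * (k - r)) * (q ^+ (m * (r * r + 2 * r)) * w r) * (u (k - r) * u (k + r + 2))) n)) => // k Hk.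
rewrite fcoef_sum big1 // => r _.
by rewrite -mulrA qXM ifF //; apply/negbTE; rewrite -ltnNge; nia.
Qed.

Theorem theorem4p3 (m : nat) (hm : (0 < m)%N) :
  exists L R P : fps,
    fps_lim (lhs_partial m) L /\ fps_lim (rhs_partial m) R /\ fps_lim qpoch P /\
    L = fps_mul P R.
Proof.
exists (fun n => lhs_partial m n.+1 n), (fun n => RH m.-1 n.+1 n), (fun n => qpS n n).
split; [|split; [|split]].
- move=> n; exists n.+1 => M' HM.
  rewrite /lhs_partial; apply: (@stab n.+1 M' (fun i => lhs_term m i n)) => // i Hi.
  exact: lhs_term0.
- move=> n; exists n.+1 => M' HM.
  by rewrite rhsE // RH_stab.
- move=> n; exists n => M' HM.
  by rewrite qpochE (eqN_qpS HM).
case: m hm => [//|m] _ /=.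
apply: functional_extensionality_dep => N.
rewrite mulE.
have EP : eqN N (fun n => qpS n n) (qpS N).
  by move=> i Hi; rewrite (eqN_qpS Hi).
have ER : eqN N (fun n => RH m n.+1 n) (RH m N.+1).
  by move=> i Hi; rewrite /= (@RH_stab m N.+1 i).
rewrite (eqN_mul EP ER) // RH_exch.
set c := fun r : nat => q ^+ (m * (r * r + 2 * r)) * w r.
have E1 : eqN N (qpS N * \sum_(r < N.+1) c r * (q ^+ (r * r) * V r (N.+1 - r)))
                (\sum_(r < N.+1) c r * q ^+ (r * r)).
  rewrite mulr_sumr; apply: eqN_sum => r _.
  have -> : qpS N * (c r * (q ^+ (r * r) * V r (N.+1 - r))) = c r * (qpS N * (q ^+ (r * r) * V r (N.+1 - r))) by ring.
  apply: eqN_mul => //.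
  have H2 := @Vtail N r N.+1 (leq_subr _ _).
  apply: eqN_trans; first exact: eqN_mul (@eqN_refl N (qpS N)) (eqN_sym H2).
  have -> : qpS N * (q ^+ (r * r) * V r N.+1) = q ^+ (r * r) * (qpS N * V r N.+1) by ring.
  have := eqN_mul (@eqN_refl N (q ^+ (r * r))) (@keyV N r).
  by rewrite mulr1.
rewrite E1 // /lhs_partial fcoef_sum.
by apply: eq_bigr => r _; rewrite lhs_termE.
Qed.
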